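(* Let $\Gamma$ be a finite simplicial graph with no SIL, and let $v,x,y$ be distinct vertices with $v\le x$ and $v\le y$. Then $x$ and $y$ commute in $\mathbb{A}_\Gamma$ (i.e. are adjacent).
   Context: $\mathbb{A}_\Gamma$ is the right-angled Artin group on $\Gamma$. $\mathrm{lk}(u)$ = neighbours of $u$, $\mathrm{st}(u)=\mathrm{lk}(u)\cup\{u\}$; $u\le v$ iff $\mathrm{lk}(u)\subseteq\mathrm{st}(v)$. A SIL is a triple $(x,y\mid z)$ of pairwise non-adjacent vertices such that the component of $\Gamma\setminus(\mathrm{lk}(x)\cap\mathrm{lk}(y))$ containing $z$ contains neither $x$ nor $y$. *)

(* Defs.v *)
From mathcomp Require Import all_boot.
Set Implicit Arguments. Unset Strict Implicit. Unset Printing Implicit Defensive.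

Definition simple_graph (T : finType) (e : rel T) : Prop :=
  symmetric e /\ irreflexive e.

Definition lk (T : finType) (e : rel T) (u : T) : {set T} := [set w | e u w].
Definition st (T : finType) (e : rel T) (u : T) : {set T} := u |: lk e u.

Definition vle (T : finType) (e : rel T) (u v : T) : bool :=
  lk e u \subset st e v.

Definition rel_minus (T : finType) (e : rel T) (S : {set T}) : rel T :=
  [rel a b | [&& e a b, a \notin S & b \notin S]].

Definition is_SIL (T : finType) (e : rel T) (x y z : T) : Prop :=
  let S := lk e x :&: lk e y in
  [/\ [&& x != y, x != z & y != z],
      [&& ~~ e x y, ~~ e x z & ~~ e y z],
      z \notin S,
      ~~ connect (rel_minus e S) z x &
      ~~ connect (rel_minus e S) z y].

Definition no_SIL (T : finType) (e : rel T) : Prop :=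
  forall x y z : T, ~ is_SIL e x y z.

(* Main.v *)
Require Import Defs.
From mathcomp Require Import all_boot.

Lemma no_escape (T : finType) (e : rel T) (S : {set T}) (v x : T) :
  v != x -> (forall w, e v w -> w \in S) -> ~~ connect (rel_minus e S) v x.
Proof.
move=> vx hS; apply/negP => /connectP [[|w p] /= pth xe]; first by rewrite xe eqxx in vx.
move: pth => /andP [/and3P [evw _ wS] _].
by rewrite (hS _ evw) in wS.
Qed.

Theorem lemma4p3 (T : finType) (e : rel T) :
  simple_graph e -> no_SIL e ->
  forall v x y : T, v != x -> v != y -> x != y ->
  vle e v x -> vle e v y -> e x y.
Proof.
move=> [esym eirr] hno v x y vx vy xy hx hy.
case exy: (e x y) => //.
have Hx : forall w, e v w -> w \in st e x.
  by move=> w ew; apply: (subsetP hx); rewrite /lk inE.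
have Hy : forall w, e v w -> w \in st e y.
  by move=> w ew; apply: (subsetP hy); rewrite /lk inE.
case evx: (e v x).
  have := Hy _ evx; rewrite /st /lk !inE (negbTE xy) /= => eyx.
  by rewrite esym eyx in exy.
case evy: (e v y).
  have := Hx _ evy; rewrite /st /lk !inE eq_sym (negbTE xy) /= => exy'.
  by rewrite exy' in exy.
exfalso; apply: (hno x y v).
have hS : forall w, e v w -> w \in lk e x :&: lk e y.
  move=> w ew; rewrite inE.
  have := Hx _ ew; have := Hy _ ew; rewrite /st !inE.
  case/orP=> [/eqP wy|->]; first by rewrite -wy ew in evy.
  case/orP=> [/eqP wx|->] //; by rewrite -wx ew in evx.
split.
- by rewrite xy eq_sym vx eq_sym vy.
- by rewrite exy esym evx esym evy.
- by rewrite /lk !inE esym evx.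
- exact: no_escape.
- exact: no_escape.
Qed.
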